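(* The two-dimensional subalgebras of ${\rm A}_1$ are exactly $\langle e_2,e_3\rangle$, $\langle e_1,e_2\rangle$ and $\langle e_1,\alpha e_2+e_3\rangle$ ($\alpha\in\mathbb{C}$). Up to automorphisms of ${\rm A}_1$, every two-dimensional subalgebra is equivalent to $\langle e_1,e_2\rangle$ or $\langle e_2,e_3\rangle$.
   Context: ${\rm A}_1$ is the complex algebra with basis $e_1,e_2,e_3$ whose only nonzero products of basis elements are $e_1e_i=e_ie_1=e_i$ ($i=1,2,3$). A subalgebra is a linear subspace closed under multiplication (it need not contain $e_1$). Two subalgebras are equivalent up to automorphisms if one is mapped onto the other by an algebra automorphism (invertible linear map $\varphi$ with $\varphi(xy)=\varphi(x)\varphi(y)$). $\langle S\rangle$ denotes the linear span of $S$. *)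

(* Defs.v *)
From HB Require Import structures.
From mathcomp Require Import all_boot all_order all_algebra.
From mathcomp Require Import complex.
From mathcomp Require Import reals.
Set Implicit Arguments. Unset Strict Implicit. Unset Printing Implicit Defensive.
Import GRing.Theory Num.Theory.
Local Open Scope ring_scope.

Section A1.
Variable C : fieldType.

Definition A1 := 'rV[C]_3.

Definition ebas (i : 'I_3) : A1 := delta_mx 0 i.
Definition e1 : A1 := ebas 0.
Definition e2 : A1 := ebas 1.
Definition e3 : A1 := ebas 2%:R.

Definition A1_tab (i j : 'I_3) : A1 :=
  if i == 0 then ebas j else if j == 0 then ebas i else 0.

Definition A1mul (x y : A1) : A1 :=
  \sum_(i < 3) \sum_(j < 3) (x 0 i * y 0 j) *: A1_tab i j.

Definition is_subalg (V : {vspace A1}) : Prop :=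
  forall x y, x \in V -> y \in V -> A1mul x y \in V.

Definition is_A1aut (f : 'End(A1)) : Prop :=
  bijective f /\ forall x y, f (A1mul x y) = A1mul (f x) (f y).

End A1.

(* Main.v *)
Require Import Defs.
From HB Require Import structures.
From mathcomp Require Import all_boot all_order all_algebra.
From mathcomp Require Import ring.
From mathcomp Require Import complex.
From mathcomp Require Import reals.
Set Implicit Arguments. Unset Strict Implicit. Unset Printing Implicit Defensive.
Import GRing.Theory Num.Theory.
Local Open Scope ring_scope.
Section S.
Variable C : fieldType.
Lemma ebasE (i j : 'I_3) : ebas C i 0 j = (i == j)%:R.
Proof. by rewrite /ebas mxE eqxx eq_sym. Qed.
Lemma sum3 (V : zmodType) (F : 'I_3 -> V) : \sum_(i<3) F i = F 0 + F 1 + F 2%:R.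
Proof. by rewrite !big_ord_recr big_ord0 /= add0r; congr (F _ + F _ + F _); apply/val_inj. Qed.
Lemma ord3P (j : 'I_3) : [\/ j = 0, j = 1 | j = 2%:R].
Proof. case: j => [[|[|[|//]]] Hj]; [constructor 1|constructor 2|constructor 3]; exact/val_inj. Qed.
Lemma mulE (x y : A1 C) : A1mul x y = x 0 0 *: y + y 0 0 *: x - (x 0 0 * y 0 0) *: e1 C.
Proof.
apply/rowP => j; rewrite /A1mul summxE sum3 !summxE !sum3 !mxE /A1_tab /e1 ?ebasE /=.
by case: (ord3P j) => ->; rewrite /=; ring.
Qed.
Implicit Types (V : {vspace A1 C}) (x y : A1 C).
Local Notation E1 := (e1 C). Local Notation E2 := (e2 C). Local Notation E3 := (e3 C).

Lemma coordE x (j : 'I_3) :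
  [/\ E1 0 j = (j == 0)%:R, E2 0 j = (j == 1)%:R & E3 0 j = (j == 2%:R)%:R].
Proof. by rewrite /e1 /e2 /e3 !ebasE !(eq_sym j). Qed.

Lemma decomp x : x = x 0 0 *: E1 + x 0 1 *: E2 + x 0 2%:R *: E3.
Proof.
apply/rowP => j; rewrite !mxE.
by case: (ord3P j) => -> /=; ring.
Qed.

Lemma e1_subalg V : E1 \in V -> is_subalg V.
Proof.
move=> h x y hx hy; rewrite mulE.
by rewrite rpredB ?rpredD ?rpredZ.
Qed.

Lemma e1_in V x : is_subalg V -> x \in V -> x 0 0 != 0 -> E1 \in V.
Proof.
move=> hV hx hx0.
have -> : E1 = (x 0 0 * x 0 0)^-1 *: (x 0 0 *: x + x 0 0 *: x - A1mul x x).
  apply/rowP => j; rewrite mulE !mxE.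
  field; exact: hx0.
by rewrite rpredZ // rpredB ?rpredD ?rpredZ // hV.
Qed.

Lemma free_e1 (v : A1 C) : v 0 0 = 0 -> v != 0 -> free [:: E1; v].
Proof.
move=> hb0 hb; rewrite free_cons span_seq1 seq1_free hb andbT.
apply/vlineP => -[k] /(congr1 (fun v : A1 C => v 0 0)).
by rewrite !mxE hb0 mulr0 /=; move/eqP; rewrite oner_eq0.
Qed.

Lemma span2_eq V (a v : A1 C) : a \in V -> v \in V -> free [:: a; v] -> \dim V = 2%N ->
  V = <<[:: a; v]>>%VS.
Proof.
move=> ha hv hf hd; apply/eqP; rewrite eq_sym eqEdim; apply/andP; split.
  by apply/span_subvP => u; rewrite !inE => /orP[/eqP->|/eqP->].
by rewrite hd (eqP hf).
Qed.

Lemma free_e23 : free [:: E2; E3].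
Proof.
rewrite free_cons span_seq1 seq1_free; apply/andP; split.
  apply/vlineP => -[k] /(congr1 (fun v : A1 C => v 0 1)).
  by rewrite !mxE /= mulr0; move/eqP; rewrite oner_eq0.
apply/eqP => /(congr1 (fun v : A1 C => v 0 2%:R)).
by rewrite !mxE /=; move/eqP; rewrite oner_eq0.
Qed.

Lemma in_e23 x : x \in <<[:: E2; E3]>>%VS -> x 0 0 = 0.
Proof.
rewrite span_cons span_seq1 => /memv_addP [u /vlineP [k ->] [v /vlineP [l ->] ->]].
by rewrite !mxE /= !mulr0 addr0.
Qed.

Lemma e23_subalg : is_subalg <<[:: E2; E3]>>%VS.
Proof.
move=> x y hx hy; rewrite mulE (in_e23 hx) (in_e23 hy) !scale0r mul0r scale0r.
by rewrite !addr0 subr0 rpred0.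
Qed.

Lemma classify V : \dim V = 2%N -> is_subalg V ->
  [\/ V = <<[:: E2; E3]>>%VS, V = <<[:: E1; E2]>>%VS
    | exists alpha : C, V = <<[:: E1; (alpha *: E2 + E3)%R]>>%VS].
Proof.
move=> hd hV.
have [he1|he1] := boolP (E1 \in V); last first.
  have h0 : forall x, x \in V -> x 0 0 = 0.
    move=> x hx; apply/eqP; apply: contraNT he1 => hx0.
    exact: (e1_in hV hx hx0).
  constructor 1; apply/eqP; rewrite eqEdim; apply/andP; split.
    apply/subvP => x hx; rewrite (decomp x) (h0 x hx) scale0r add0r.
    by rewrite rpredD ?rpredZ ?memv_span ?inE ?eqxx ?orbT.
  by rewrite hd; apply: leq_trans (dim_span _) _.
have : ~~ (V <= <[E1]>)%VS.
  apply/negP => /dimvS; rewrite hd dim_vline; by case: (E1 != 0).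
case/subvPn => w hw hwn.
set m := w - w 0 0 *: E1.
have hm : m \in V by rewrite rpredB ?rpredZ.
have hm0 : m 0 0 = 0 by rewrite !mxE /= mulr1 subrr.
have hmn : m != 0.
  apply/eqP => /subr0_eq hw'; move: hwn; rewrite hw'.
  by rewrite rpredZ ?memv_line.
have hmd : m = m 0 1 *: E2 + m 0 2%:R *: E3 by rewrite {1}(decomp m) hm0 scale0r add0r.
have [h2|h2] := eqVneq (m 0 2%:R) 0.
  have h1 : m 0 1 != 0.
    apply: contraNneq hmn => h1; by rewrite hmd h1 h2 !scale0r addr0.
  have he2 : E2 \in V.
    have -> : E2 = (m 0 1)^-1 *: m by rewrite {2}hmd h2 scale0r addr0 scalerA mulVf ?scale1r.
    by rewrite rpredZ.
  constructor 2; apply: span2_eq => //; apply: free_e1.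
    by rewrite !mxE.
  apply/eqP => /(congr1 (fun v : A1 C => v 0 1)).
  by rewrite !mxE /=; move/eqP; rewrite oner_eq0.
constructor 3; exists (m 0 1 / m 0 2%:R).
have -> : m 0 1 / m 0 2%:R *: E2 + E3 = (m 0 2%:R)^-1 *: m.
  by rewrite {4}hmd scalerDr !scalerA mulVf // scale1r mulrC.
apply: span2_eq => //; first by rewrite rpredZ.
apply: free_e1; first by rewrite mxE hm0 mulr0.
by rewrite scaler_eq0 invr_eq0 negb_or h2.
Qed.

Lemma aut_mx (M N : 'M[C]_3) : M *m N = 1%:M -> N *m M = 1%:M ->
  (forall x, (x *m M) 0 0 = x 0 0) -> E1 *m M = E1 ->
  is_A1aut (linfun (mulmxr M) : 'End(A1 C)).
Proof.
move=> hMN hNM h0 he1; split.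
  exists (linfun (mulmxr N) : 'End(A1 C)) => x; rewrite !lfunE /= -mulmxA ?hMN ?hNM mulmx1 //.
move=> x y; rewrite !lfunE /= !mulE !h0 mulmxBl mulmxDl -!scalemxAl he1.
by [].
Qed.

Definition Ma (a : C) : 'M[C]_3 :=
  \matrix_(i < 3, j < 3) nth 0 (nth [::] [:: [:: 1; 0; 0]; [:: 0; 0; 1]; [:: 0; 1; -a]] i) j.
Definition Na (a : C) : 'M[C]_3 :=
  \matrix_(i < 3, j < 3) nth 0 (nth [::] [:: [:: 1; 0; 0]; [:: 0; a; 1]; [:: 0; 1; 0]] i) j.

Lemma MaNa a : Ma a *m Na a = 1%:M.
Proof.
apply/matrixP => i j; rewrite !mxE sum3 !mxE.
by case: (ord3P i) => ->; case: (ord3P j) => -> /=; ring.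
Qed.
Lemma NaMa a : Na a *m Ma a = 1%:M.
Proof.
apply/matrixP => i j; rewrite !mxE sum3 !mxE.
by case: (ord3P i) => ->; case: (ord3P j) => -> /=; ring.
Qed.
Lemma Ma0 a x : (x *m Ma a) 0 0 = x 0 0.
Proof. by rewrite !mxE sum3 !mxE /=; ring. Qed.
Lemma Ma_e1 a : E1 *m Ma a = E1.
Proof.
apply/rowP => j; rewrite !mxE sum3 !mxE.
by case: (ord3P j) => -> /=; ring.
Qed.
Lemma Ma_v a : (a *: E2 + E3) *m Ma a = E2.
Proof.
apply/rowP => j; rewrite !mxE sum3 !mxE.
by case: (ord3P j) => -> /=; ring.
Qed.
End S.

Theorem mainTheorem5 (R : realType) :
  (forall V : {vspace A1 R[i]}, \dim V = 2%N ->
     (is_subalg V <->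
        [\/ V = <<[:: e2 R[i]; e3 R[i]]>>%VS,
            V = <<[:: e1 R[i]; e2 R[i]]>>%VS
          | exists alpha : R[i],
              V = <<[:: e1 R[i]; (alpha *: e2 R[i] + e3 R[i])%R]>>%VS]))
  /\
  (forall V : {vspace A1 R[i]}, \dim V = 2%N -> is_subalg V ->
     exists f : 'End(A1 R[i]), is_A1aut f /\
       ((f @: V)%VS = <<[:: e1 R[i]; e2 R[i]]>>%VS \/
        (f @: V)%VS = <<[:: e2 R[i]; e3 R[i]]>>%VS)).
Proof.
split.
  move=> V hd; split; first exact: classify.
  case=> [->|->|[a ->]]; first exact: e23_subalg.
    by apply: e1_subalg; rewrite memv_span ?mem_head.
  by apply: e1_subalg; rewrite memv_span ?mem_head.
move=> V hd hV; case: (classify hd hV) => [->|->|[a ->]].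
- exists (linfun (mulmxr 1%:M) : 'End(A1 R[i])); split.
    by apply: (aut_mx (N := 1%:M)); try move=> x; rewrite mulmx1.
  by right; rewrite limg_span /= !lfunE /= !mulmx1.
- exists (linfun (mulmxr 1%:M) : 'End(A1 R[i])); split.
    by apply: (aut_mx (N := 1%:M)); try move=> x; rewrite mulmx1.
  by left; rewrite limg_span /= !lfunE /= !mulmx1.
- exists (linfun (mulmxr (Ma a)) : 'End(A1 R[i])); split.
    apply: (aut_mx (MaNa a) (NaMa a)); [move=> x; exact: (Ma0 a x) | exact: (Ma_e1 a)].
  by left; rewrite limg_span /= !lfunE /= (Ma_e1 a) (Ma_v a).
Qed.
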